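(* Let $n\in\mathbb{N}$ and let $Z$ be a finite right $\mathrm{End}(\mathbb{F}^n)$-set. Then there exists $t\in\mathbb{N}$ such that the composite $X_Z\to G_Z\twoheadrightarrow q_tG_Z$ is a monomorphism. In particular, $X_Z$ is a finite presheaf of degree at most $t$.
   Context: $p$ prime, $\mathbb{F}=\mathbb{F}_p$, $\mathscr{V}_f$ finite-dimensional $\mathbb{F}$-vector spaces; presheaves are contravariant functors on $\mathscr{V}_f$. $\mathscr{F}$ is the abelian category of functors $\mathscr{V}_f^{\mathrm{op}}\to$ ($\mathbb{F}$-vector spaces); a functor is finite if it has a finite composition series. Polynomial degree in $\mathscr{F}$ is in the sense of Eilenberg–MacLane (vanishing of the $(t+1)$-st cross-effect); $q_t:\mathscr{F}\to\mathscr{F}$ is left adjoint to the inclusion of functors of polynomial degree $\le t$, and $F\twoheadrightarrow q_tF$ is the universal map to a polynomial functor of degree $\le t$. $X_Z$ is the presheaf $V\mapsto Z\times_{\mathrm{End}(\mathbb{F}^n)}\mathrm{Hom}(V,\mathbb{F}^n)$, $G_Z\in\mathscr{F}$ is $V\mapsto\mathbb{F}[Z]\otimes_{\mathbb{F}[\mathrm{End}(\mathbb{F}^n)]}\mathbb{F}[\mathrm{Hom}(V,\mathbb{F}^n)]$, and $X_Z\to G_Z$ is induced by $Z\hookrightarrow\mathbb{F}[Z]$. A presheaf $X$ taking finite values is finite of degree at most $t$ if the composite $X\hookrightarrow\mathbb{F}[X]\twoheadrightarrow q_t\mathbb{F}[X]$ is a monomorphism ($\mathbb{F}[X]$ the sectionwise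 linearization); equivalently $X$ embeds in a finite functor of $\mathscr{F}$ of polynomial degree $\le t$. *)

(* Defs.v *)
(* Skeleton of V_f: objects are dimensions d : nat (F^d),
   a linear map F^d' -> F^d is a matrix 'M_(d, d') acting on column vectors,
   so composition a o b is a *m b. *)
From mathcomp Require Import all_boot all_order all_algebra.
From Stdlib Require Import Relations.
Set Implicit Arguments. Unset Strict Implicit. Unset Printing Implicit Defensive.
Import GRing.Theory.
Local Open Scope ring_scope.

Section Defs.
Variable p : nat.
Local Notation F := 'F_p.

(* linear map F[A] -> F[B] induced by a map of sets h : A -> B *)
Definition push (A B : finType) (h : A -> B) (phi : {ffun A -> F}) : {ffun B -> F} :=
  [ffun y => \sum_(x | h x == y) phi x].

Definition delta (A : finType) (x : A) : {ffun A -> F} := [ffun y => (y == x)%:R].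

Definition fscale (A : finType) (a : F) (phi : {ffun A -> F}) : {ffun A -> F} :=
  [ffun x => a * phi x].

Variables (n : nat) (Z : finType) (act : Z -> 'M[F]_n -> Z).

(* Z x Hom(F^d, F^n) ; Hom(F^d,F^n) = 'M_(n,d) *)
Local Notation Pt d := (Z * 'M[F]_(n, d))%type.

(* X_Z(F^d) = Z x_{End(F^n)} Hom(F^d,F^n): the quotient of Z x Hom(F^d,F^n)
   by the equivalence generated by (z.e, f) ~ (z, e o f). *)
Definition xrel d : relation (Pt d) :=
  fun x y => exists z e f, x = (act z e, f) /\ y = (z, e *m f).
Definition xeq d : relation (Pt d) := @clos_refl_sym_trans (Pt d) (@xrel d).

(* F[Z x Hom(-,F^n)] on morphisms: for g : F^d' -> F^d, (z,f) |-> (z, f o g) *)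
Definition Gmap d d' (g : 'M[F]_(d, d')) : {ffun Pt d -> F} -> {ffun Pt d' -> F} :=
  push (fun x : Pt d => (x.1, x.2 *m g)).

(* Direct sum decomposition F^d = V_1 (+) ... (+) V_m into coordinate blocks
   given by b : 'I_d -> 'I_m;  proj b I = idempotent projecting onto (+)_{i in I} V_i *)
Definition proj d m (b : 'I_d -> 'I_m) (I : {set 'I_m}) : 'M[F]_d :=
  \matrix_(i, j) ((i == j) && (b i \in I))%:R.

(* the idempotent  sum_I (-1)^(m-|I|) G(e_I)  whose image is the m-th cross-effect *)
Definition cross d m (b : 'I_d -> 'I_m) (phi : {ffun Pt d -> F}) : {ffun Pt d -> F} :=
  \sum_(I : {set 'I_m}) fscale ((-1) ^+ (m - #|I|)) (Gmap (proj b I) phi).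

(* K is a subfunctor of F[Z x Hom(-,F^n)] containing the tensor relations
   [z.e, f] - [z, e o f]; i.e. K corresponds to a subfunctor of
   G_Z = F[Z] (x)_{F[End F^n]} F[Hom(-,F^n)]. *)
Definition Gsubfunctor (K : forall d, {ffun Pt d -> F} -> Prop) : Prop :=
  [/\ (forall d, K d 0),
      (forall d phi psi, K d phi -> K d psi -> K d (phi + psi)),
      (forall d (a : F) phi, K d phi -> K d (fscale a phi)),
      (forall d d' (g : 'M[F]_(d, d')) phi, K d phi -> K d' (Gmap g phi)) &
      (forall d z (e : 'M[F]_n) (f : 'M[F]_(n, d)),
          K d (delta (act z e, f) - delta (z, e *m f)))].

(* the quotient functor G_Z / K has polynomial degree <= t:
   its (t+1)-st cross-effect vanishes for all V_1, ..., V_{t+1} *)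
Definition quot_deg_le (t : nat) (K : forall d, {ffun Pt d -> F} -> Prop) : Prop :=
  forall d (b : 'I_d -> 'I_t.+1) (phi : {ffun Pt d -> F}), K d (cross b phi).

(* kernel of F[Z x Hom(F^d,F^n)] ->> G_Z(F^d) ->> q_t G_Z(F^d):
   the intersection of all subfunctors K with G_Z/K of degree <= t *)
Definition qt_ker (t d : nat) (phi : {ffun Pt d -> F}) : Prop :=
  forall K, Gsubfunctor K -> quot_deg_le t K -> K d phi.

End Defs.

(* Main.v *)
Require Import Defs.
From mathcomp Require Import all_boot all_order all_algebra.
From Stdlib Require Import Relations ClassicalDescription.
Import GRing.Theory.
Local Open Scope ring_scope.

Section Comb.
Variable p : nat.
Hypothesis hp : prime p.
Local Notation F := 'F_p.
Variable A : finZmodType.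
Hypothesis hA : forall u : A, u *+ p = 0.

Definition Dl (v : A) (g : A -> F) : A -> F := fun a => g (a + v) - g a.

Lemma pchar_polyF : p \in [pchar {poly F}].
Proof. exact: (rmorph_pchar (polyC : {rmorphism F -> {poly F}}) (pchar_Fp hp)). Qed.

Lemma XsubpE : ('X - 1 : {poly F}) ^+ p = 'X^p - 1.
Proof.
have := pFrobenius_autB_comm pchar_polyF (commr1 'X).
by rewrite !pFrobenius_autE expr1n.
Qed.

Lemma iterDl_coef v k g a : iter k (Dl v) g a =
  \sum_(j < k.+1) (('X - 1 : {poly F})^+k)`_j * g (a + v *+ j).
Proof.
elim: k g a => [|k IH] g a.
  by rewrite big_ord1 expr0 coef1 /= mul1r mulr0n addr0.
rewrite iterSr IH exprSr mulrBr mulr1.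
set q := ('X - 1 : {poly F})^+k.
have sz : size q = k.+1 by rewrite /q -polyC1 size_exp_XsubC.
under [RHS]eq_bigr do rewrite coefB coefMX mulrBl.
rewrite sumrB (big_ord_recl k.+1) /= mul0r add0r (big_ord_recr k.+1) /= [q`_k.+1]nth_default ?sz //.
rewrite mul0r addr0 /Dl.
under eq_bigr do rewrite mulrBr.
rewrite sumrB; congr (_ - _); apply: eq_bigr => j _.
by rewrite /bump /= add1n mulrSr addrA.
Qed.

Lemma iterDl_p v g a : iter p (Dl v) g a = 0.
Proof.
rewrite iterDl_coef XsubpE.
under eq_bigr do rewrite coefB coefXn coef1 mulrBl.
rewrite sumrB big_ord_recr /= eqxx big1 ?add0r; last first.
  by move=> j _; rewrite ltn_eqF // mul0r.
rewrite big_ord_recl /= big1 ?addr0; last by move=> j _; rewrite mul0r.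
by rewrite !mul1r hA addr0 subrr.
Qed.

Lemma iterDl_ge v k g a : (p <= k)%N -> iter k (Dl v) g a = 0.
Proof.
move=> pk; rewrite -(subnK pk) iterD.
elim: (k - p)%N a => [|j IH] a /=; first exact: iterDl_p.
by rewrite /Dl !IH subrr.
Qed.

Variables (T : finType) (u : T -> A).

Definition S (U : {set T}) (g : A -> F) : F :=
  \sum_(I : {set T} | I \subset U) (-1)^+(#|U| - #|I|) * g (\sum_(j in I) u j).

Lemma S0 (U : {set T}) (g : A -> F) : (forall a, g a = 0) -> S U g = 0.
Proof. by move=> g0; rewrite /S big1 // => I _; rewrite g0 mulr0. Qed.

Lemma S_rec (U : {set T}) (g : A -> F) (x : T) : x \in U -> S U g = S (U :\ x) (Dl (u x) g).
Proof.
move=> xU; rewrite /S (bigID (fun I : {set T} => x \in I)) /= addrC.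
have cU : #|U| = #|U :\ x|.+1 by rewrite (cardsD1 x U) xU.
rewrite /Dl; under [RHS]eq_bigr do rewrite mulrBr.
rewrite sumrB addrC; congr (_ + _); last first.
  rewrite -sumrN; apply: eq_big => [I|I].
    by rewrite (subsetD1 I U x).
  move=> /andP[sIU xI].
  rewrite cU subSn ?exprS ?mulN1r ?mulNr //.
  by apply: subset_leq_card; rewrite subsetD1 sIU xI.
rewrite (reindex_onto (fun J => x |: J) (fun I => I :\ x)); last first.
  by move=> I /andP[_ xI]; rewrite setD1K.
apply: eq_big => [J|J].
  rewrite subsetD1 subUset sub1set xU setU11 andbT /=.
  case: (boolP (x \in J)) => xJ.
    rewrite andbF; case: eqP => [e|_]; last by rewrite andbF.
    by move: xJ; rewrite -e !inE eqxx.
  by rewrite setU1K // eqxx.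
move=> /andP[_ /eqP e]; have xJ : x \notin J by rewrite -e !inE eqxx.
by rewrite cardsU1 xJ cU subSS big_setU1 //= addrC.
Qed.

Lemma S_iter k : forall (U W : {set T}) (g : A -> F) (v : A), #|W| = k -> W \subset U ->
  (forall x, x \in W -> u x = v) -> S U g = S (U :\: W) (iter k (Dl v) g).
Proof.
elim: k => [|k IH] U W g v cW sWU hW.
  by move/cards0_eq: cW => ->; rewrite setD0.
have /card_gt0P [x xW] : (0 < #|W|)%N by rewrite cW.
rewrite (@S_rec U g x (subsetP sWU x xW)) hW //.
have cW' : #|W :\ x| = k by move: cW; rewrite (cardsD1 x W) xW add1n => -[].
rewrite (IH (U :\ x) (W :\ x) _ v cW').
- rewrite iterSr; congr S; apply/setP => y; rewrite !inE.
  by case: eqVneq => [->|]; rewrite ?xW.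
- exact: setSD.
- by move=> y /setD1P [_ yW]; exact: hW.
Qed.

Lemma S_vanish g : (p.-1 * #|A| < #|T|)%N -> S [set: T] g = 0.
Proof.
move=> hT.
case: (boolP [exists v : A, (p <= #|[set x | u x == v]|)%N]) => [/existsP [v hv]|/existsPn hn].
  rewrite (@S_iter _ _ [set x | u x == v] g v (erefl _) (subsetT _)); last first.
    by move=> x; rewrite inE => /eqP.
  by apply: S0 => a; apply: iterDl_ge.
exfalso; move: hT; apply/negP; rewrite -leqNgt.
have -> : #|T| = (\sum_(v : A) #|[set x | u x == v]|)%N.
  rewrite -sum1_card (partition_big u predT) //=.
  apply: eq_bigr => v _; rewrite -sum1_card; apply: eq_bigl => x.
  by rewrite inE.
apply: (@leq_trans (\sum_(v : A) p.-1)%N).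
  apply: leq_sum => v _; have := hn v; rewrite -ltnNge => h.
  by rewrite -ltnS prednK ?prime_gt0.
by rewrite sum_nat_const mulnC.
Qed.

End Comb.


Section Main.
Variable p : nat.
Hypothesis hp : prime p.
Local Notation F := 'F_p.
Variables (n : nat) (Z : finType) (act : Z -> 'M[F]_n -> Z).
Local Notation m := (n + n)%N.
Local Notation Pt d := (Z * 'M[F]_(n, d))%type.

Definition cc (a w : Pt m) : F :=
  if excluded_middle_informative (xeq act a w) then 1 else 0.

Lemma cc_resp a b w : xeq act a b -> cc a w = cc b w.
Proof.
move=> ab; rewrite /cc.
case: excluded_middle_informative => aw; case: excluded_middle_informative => bw //.
  by exfalso; apply: bw; apply: rst_trans aw; apply: rst_sym.
by exfalso; apply: aw; apply: rst_trans ab bw.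
Qed.

Lemma xeq_map d d' (g : 'M[F]_(d, d')) (a b : Pt d) :
  xeq act a b -> xeq act (a.1, a.2 *m g) (b.1, b.2 *m g).
Proof.
elim=> {a b} [a b [z [e [f [-> ->]]]]|a|a b _ IH|a b c _ IH1 _ IH2].
- by apply: rst_step; exists z, e, (f *m g); rewrite mulmxA.
- exact: rst_refl.
- exact: rst_sym.
- exact: rst_trans IH1 IH2.
Qed.

Definition Psi d (h : 'M[F]_(d, m)) (w : Pt m) (phi : {ffun Pt d -> F}) : F :=
  \sum_(x : Pt d) phi x * cc (x.1, x.2 *m h) w.
Arguments Psi {d}.

Lemma Psi0 d (h : 'M[F]_(d, m)) w : Psi h w (0 : {ffun Pt d -> F}) = 0 :> F.
Proof. by rewrite /Psi big1 // => x _; rewrite ffunE mul0r. Qed.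

Lemma PsiD d h w (phi psi : {ffun Pt d -> F}) :
  Psi h w (phi + psi) = Psi h w phi + Psi h w psi.
Proof. by rewrite /Psi -big_split; apply: eq_bigr => x _; rewrite ffunE mulrDl. Qed.

Lemma PsiB d h w (phi psi : {ffun Pt d -> F}) :
  Psi h w (phi - psi) = Psi h w phi - Psi h w psi.
Proof. by rewrite /Psi -sumrB; apply: eq_bigr => x _; rewrite !ffunE mulrBl. Qed.

Lemma PsiZ d h w a (phi : {ffun Pt d -> F}) :
  Psi h w (fscale a phi) = a * Psi h w phi.
Proof. by rewrite /Psi mulr_sumr; apply: eq_bigr => x _; rewrite ffunE mulrA. Qed.

Lemma Psi_Gmap d d' (g : 'M[F]_(d, d')) h w (phi : {ffun Pt d -> F}) :
  Psi h w (Gmap g phi) = Psi (g *m h) w phi.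
Proof.
rewrite /Psi /Gmap /push.
rewrite [RHS](partition_big (fun x : Pt d => (x.1, x.2 *m g)) predT) //=.
apply: eq_bigr => y _; rewrite ffunE mulr_suml.
apply: eq_big => [x|x /eqP <-]; first by [].
by rewrite /= mulmxA.
Qed.

Lemma Psi_delta d h w (x : Pt d) : Psi h w (delta p x) = cc (x.1, x.2 *m h) w.
Proof.
rewrite /Psi (bigD1 x) //= ffunE eqxx mul1r big1 ?addr0 // => y /negbTE yx.
by rewrite ffunE yx mul0r.
Qed.

Lemma Psi_sum d h w (I : finType) (P : pred I) (G : I -> {ffun Pt d -> F}) :
  Psi h w (\sum_(i | P i) G i) = \sum_(i | P i) Psi h w (G i).
Proof. exact: (big_morph _ (@PsiD d h w) (@Psi0 d h w)). Qed.

Lemma proj_sum d t (b : 'I_d -> 'I_t) (I : {set 'I_t}) :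
  proj p b I = \sum_(j in I) proj p b [set j].
Proof.
apply/matrixP => i i'; rewrite summxE; under eq_bigr do rewrite mxE.
rewrite mxE; case: (i == i') => /=; last by rewrite big1.
under eq_bigr do rewrite in_set1.
case: (boolP (b i \in I)) => bI.
  rewrite (bigD1 (b i)) //= eqxx big1 ?addr0 // => j /andP[_ /negbTE].
  by rewrite eq_sym => ->.
rewrite big1 // => j jI; have: b i != j by apply: contraNneq bI => ->.
by move/negbTE => ->.
Qed.

Lemma hAm : forall u : 'M[F]_(n, m), u *+ p = 0.
Proof. by move=> u; rewrite -scaler_nat pchar_Fp_0 // scale0r. Qed.

Lemma Psi_cross d t (b : 'I_d -> 'I_t.+1) h w (phi : {ffun Pt d -> F}) :
  (p.-1 * #|{: 'M[F]_(n, m)}| < t.+1)%N -> Psi h w (cross b phi) = 0.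
Proof.
move=> ht; rewrite /cross Psi_sum.
under eq_bigr do rewrite PsiZ Psi_Gmap /Psi mulr_sumr.
rewrite exchange_big /=; apply: big1 => x _.
under eq_bigr do rewrite mulrCA.
rewrite -mulr_sumr.
have := @S_vanish p hp _ hAm _ (fun j => x.2 *m (proj p b [set j] *m h))
  (fun a => cc (x.1, a) w).
rewrite card_ord => /(_ ht) S0'.
rewrite -[RHS](mulr0 (phi x)); congr (_ * _); rewrite -[RHS]S0' /S cardsT card_ord.
apply: eq_big => [I|I _]; first by rewrite subsetT.
by rewrite proj_sum mulmx_suml mulmx_sumr.
Qed.

End Main.


Theorem theorem5p8 (p : nat) (hp : prime p) (n : nat) (Z : finType)
    (act : Z -> 'M['F_p]_n -> Z)
    (act1 : forall z, act z 1%:M = z)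
    (actM : forall z (a b : 'M['F_p]_n), act z (a *m b) = act (act z a) b) :
  exists t : nat, forall (d : nat) (x y : (Z * 'M['F_p]_(n, d))%type),
    qt_ker act t (delta p x - delta p y) -> xeq act x y.
Proof.
exists (p * #|{: 'M['F_p]_(n, n + n)}|)%N.
move=> d [zx fx] [zy fy] hq.
pose K := fun d (phi : {ffun (Z * 'M['F_p]_(n, d))%type -> 'F_p}) =>
  forall h w, @Psi p n Z act d h w phi = 0.
have KG : Gsubfunctor act K.
  split.
  - by move=> d0 h w; apply: Psi0.
  - by move=> d0 phi psi H1 H2 h w; rewrite PsiD H1 H2 addr0.
  - by move=> d0 a phi H1 h w; rewrite PsiZ H1 mulr0.
  - by move=> d0 d1 g phi H1 h w; rewrite Psi_Gmap H1.
  - move=> d0 z e f h w; rewrite PsiB !Psi_delta /=.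
    rewrite (@cc_resp p n Z act _ (z, e *m f *m h)) ?subrr //.
    by apply: rst_step; exists z, e, (f *m h); rewrite mulmxA.
have KD : quot_deg_le (p * #|{: 'M['F_p]_(n, n + n)}|)%N K.
  move=> d0 b phi h w; apply: Psi_cross => //.
  rewrite ltnS; apply: leq_mul => //; exact: leq_pred.
have := hq K KG KD.
set g := col_mx fx fy; set k := pinvmx g.
move=> /(_ k (zx, fx *m k)); rewrite PsiB !Psi_delta /=.
have -> : @cc p n Z act (zx, fx *m k) (zx, fx *m k) = 1.
  rewrite /cc; destruct (excluded_middle_informative _) as [H0|H]; first by [].
  by exfalso; apply: H; apply: rst_refl.
rewrite /cc; destruct (excluded_middle_informative _) as [yx|H1]; last first.
  by rewrite subr0 => /eqP; rewrite oner_eq0.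
move=> _; have := @xeq_map p n Z act _ _ g _ _ yx.
have := submx_refl g; rewrite col_mx_sub => /andP [sx sy].
rewrite /= (mulmxKpV sy) (mulmxKpV sx) => H.
exact: rst_sym.
Qed.
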